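(* Let $\pi$ be a set of primes and $G$ a group. Let $A$ be a $\mathbb ZG$-module whose additive group is divisible, and let $B$ be a finite $\mathbb ZG$-submodule of $A$. Suppose there is a $\mathbb ZG$-module epimorphism $\theta:U\to A/B$, where $U$ is a $\mathbb ZG$-module whose additive group is torsion-free of finite rank and $\pi$-spectral. Then $A$ is a $\mathbb ZG$-module quotient of some $\mathbb ZG$-module whose additive group is torsion-free of finite rank and $\pi$-spectral.
   Context: An abelian group has finite rank if its torsion-free rank and all $p$-ranks are finite; it is $\pi$-spectral if every prime $p$ for which it has a section isomorphic to $\mathbb Z_{p^\infty}$ lies in $\pi$. *)

(* Defs.v *)
From HB Require Import structures.
From mathcomp Require Import all_boot all_order all_algebra all_field.
Set Implicit Arguments. Unset Strict Implicit. Unset Printing Implicit Defensive.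
Import Order.TTheory GRing.Theory Num.Theory.
Local Open Scope ring_scope.

Definition is_group (G : Type) (mul : G -> G -> G) (one : G) (inv : G -> G) : Prop :=
  [/\ forall x y z, mul x (mul y z) = mul (mul x y) z,
      forall x, mul one x = x &
      forall x, mul (inv x) x = one].

Definition is_ZGmodule (G : Type) (mul : G -> G -> G) (one : G)
    (M : zmodType) (act : G -> M -> M) : Prop :=
  [/\ forall g x y, act g (x + y) = act g x + act g y,
      forall x, act one x = x &
      forall g h x, act (mul g h) x = act g (act h x)].

Definition is_ZGhom (G : Type) (M N : zmodType) (actM : G -> M -> M)
    (actN : G -> N -> N) (f : M -> N) : Prop :=
  (forall x y, f (x + y) = f x + f y) /\ (forall g x, f (actM g x) = actN g (f x)).

Definition is_ZGepi (G : Type) (M N : zmodType) (actM : G -> M -> M)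
    (actN : G -> N -> N) (f : M -> N) : Prop :=
  is_ZGhom actM actN f /\ (forall y, exists x, f x = y).

Definition is_subgroup (M : zmodType) (H : M -> Prop) : Prop :=
  H 0 /\ (forall x y, H x -> H y -> H (x - y)).

Definition is_ZGsubmodule (G : Type) (M : zmodType) (act : G -> M -> M)
    (B : M -> Prop) : Prop :=
  is_subgroup B /\ (forall g x, B x -> B (act g x)).

Definition finite_set (M : zmodType) (B : M -> Prop) : Prop :=
  exists s : seq M, forall x, B x -> x \in s.

Definition divisible (M : zmodType) : Prop :=
  forall (n : nat) (x : M), (0 < n)%N -> exists y, y *+ n = x.

Definition torsion_free (M : zmodType) : Prop :=
  forall (n : nat) (x : M), (0 < n)%N -> x *+ n = 0 -> x = 0.

Definition Z_independent (M : zmodType) (s : seq M) : Prop :=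
  forall c : seq int, size c = size s ->
    \sum_(i < size s) (s`_i *~ c`_i) = 0 -> forall i, c`_i = 0.

Definition Fp_independent (M : zmodType) (p : nat) (s : seq M) : Prop :=
  (forall i, (i < size s)%N -> s`_i *+ p = 0) /\
  forall c : seq nat, size c = size s ->
    \sum_(i < size s) (s`_i *+ nth 0%N c i) = 0 -> forall i, (p %| nth 0%N c i)%N.

Definition finite_rank (M : zmodType) : Prop :=
  (exists r : nat, forall s : seq M, Z_independent s -> (size s <= r)%N) /\
  (forall p : nat, prime p ->
     exists r : nat, forall s : seq M, Fp_independent p s -> (size s <= r)%N).

(* The Pruefer group Z_{p^oo}, realised as the multiplicative group of
   p-power roots of unity in algC. *)
Definition prufer_elt (p : nat) (z : algC) : Prop := exists n : nat, z ^+ (p ^ n) = 1.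

(* M has a section H/K isomorphic to Z_{p^oo}: a subgroup H and an
   epimorphism f from H onto Z_{p^oo} (K is then its kernel). *)
Definition has_prufer_section (M : zmodType) (p : nat) : Prop :=
  exists (H : M -> Prop) (f : M -> algC),
    [/\ is_subgroup H,
        forall x y, H x -> H y -> f (x + y) = f x * f y,
        forall x, H x -> prufer_elt p (f x) &
        forall z, prufer_elt p z -> exists2 x, H x & f x = z].

Definition spectral (pi : pred nat) (M : zmodType) : Prop :=
  forall p : nat, prime p -> has_prufer_section M p -> p \in pi.

(* Main.v *)
Require Import Defs.
From HB Require Import structures.
From mathcomp Require Import all_boot all_order all_algebra all_field.
From Stdlib Require Import ClassicalEpsilon.
Set Implicit Arguments. Unset Strict Implicit.
Import Order.TTheory GRing.Theory Num.Theory.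
Local Open Scope ring_scope.

Lemma add_sub (M N : zmodType) (f : M -> N) :
  (forall x y, f (x + y) = f x + f y) -> forall x y, f (x - y) = f x - f y.
Proof.
move=> hf x y; have := hf (x - y) y; rewrite subrK => ->.
by rewrite addrK.
Qed.

Lemma add_mulrn (M N : zmodType) (f : M -> N) :
  (forall x y, f (x + y) = f x + f y) -> forall x n, f (x *+ n) = f x *+ n.
Proof.
move=> hf x; elim=> [|n IH].
  by rewrite !mulr0n; have := add_sub hf 0 0; rewrite !subrr.
by rewrite !mulrS hf IH.
Qed.

Lemma sub_mulrn (M : zmodType) (B : M -> Prop) : is_subgroup B ->
  forall x n, B x -> B (x *+ n).
Proof.
case=> h0 hs x n hx; elim: n => [|n IH]; first by rewrite mulr0n.
have hN : forall y, B y -> B (- y).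
  by move=> y hy; rewrite -sub0r; apply: hs.
by rewrite mulrS; have := hs _ _ hx (hN _ IH); rewrite opprK.
Qed.

Lemma finite_exp (M : zmodType) (B : M -> Prop) (s : seq M) :
  is_subgroup B -> (forall x, B x -> x \in s) ->
  forall b, B b -> b *+ (size s)`! = 0.
Proof.
move=> hB hs b hb.
set t := [seq b *+ i | i <- iota 0 (size s).+1].
have : ~~ uniq t.
  apply/negP=> ut; have := uniq_leq_size ut.
  have sub : {subset t <= undup s}.
    move=> y /mapP [i _ ->]; rewrite mem_undup; apply: hs; exact: sub_mulrn.
  move/(_ _ sub); rewrite size_map size_iota => H.
  by have := leq_trans H (size_undup s); rewrite ltnn.
move/(uniqPn 0) => [i [j [ij jt eq]]].
move: jt; rewrite /t size_map size_iota => jt.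
move: eq; rewrite !(nth_map 0%N) ?size_iota ?(ltn_trans ij) //.
rewrite !nth_iota ?(ltn_trans ij) // !add0n => eq.
have hji : b *+ (j - i) = 0.
  by rewrite mulrnBr ?(ltnW ij) // eq subrr.
have : (j - i %| (size s)`!)%N.
  apply: dvdn_fact; rewrite subn_gt0 ij /=.
  by rewrite (leq_trans (leq_subr i j)) // -ltnS.
by case/dvdnP=> k ->; rewrite mulnC mulrnA hji mul0rn.
Qed.

Theorem lemma4p5 (pi : pred nat)
    (G : Type) (mul : G -> G -> G) (one : G) (inv : G -> G)
    (hG : is_group mul one inv)
    (A : zmodType) (actA : G -> A -> A) (hA : is_ZGmodule mul one actA)
    (hAdiv : divisible A)
    (B : A -> Prop) (hB : is_ZGsubmodule actA B) (hBfin : finite_set B)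
    (Q : zmodType) (actQ : G -> Q -> Q) (hQ : is_ZGmodule mul one actQ)
    (q : A -> Q) (hq : is_ZGepi actA actQ q) (hqker : forall a, q a = 0 <-> B a)
    (U : zmodType) (actU : G -> U -> U) (hU : is_ZGmodule mul one actU)
    (hUtf : torsion_free U) (hUrk : finite_rank U) (hUsp : spectral pi U)
    (theta : U -> Q) (htheta : is_ZGepi actU actQ theta) :
  exists (V : zmodType) (actV : G -> V -> V) (phi : V -> A),
    [/\ is_ZGmodule mul one actV, torsion_free V, finite_rank V,
        spectral pi V & is_ZGepi actV actA phi].
Proof.
case: hBfin => s hs.
case: hB => hBs hBact.
set e := (size s)`!.
have hBe := finite_exp hBs hs.
case: hq => [[qadd qact] qsurj].
case: htheta => [[tadd tact] tsurj].
have key : forall x y, q x = q y -> x *+ e = y *+ e.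
  move=> x y h; apply/eqP; rewrite -subr_eq0 -mulrnBl; apply/eqP.
  apply: hBe; apply/hqker; by rewrite (add_sub qadd) h subrr.
have lift : forall y : Q, {a : A | q a = y}.
  by move=> y; apply: constructive_indefinite_description; exact: qsurj.
pose phi := fun u : U => sval (lift (theta u)) *+ e.
have hphi : forall u a, q a = theta u -> phi u = a *+ e.
  by move=> u a h; apply: key; rewrite (svalP (lift (theta u))).
case: hA => aadd aone amul.
exists U, actU, phi; split => //; split; first split.
- move=> x y; rewrite (hphi (x + y) (sval (lift (theta x)) + sval (lift (theta y)))).
    by rewrite mulrnDl.
  by rewrite qadd !(svalP (lift _)) tadd.
- move=> g x; rewrite (hphi _ (actA g (sval (lift (theta x))))).
    by rewrite /phi (add_mulrn (aadd g)).
  by rewrite qact (svalP (lift _)) tact.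
- move=> a; case: (hAdiv e a (fact_gt0 _)) => a' <-.
  case: (tsurj (q a')) => u hu; exists u; exact: hphi.
Qed.
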